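(* Let $G$ be a finitely generated group, $X,Y$ uniform spaces, $\mu$ a Borel measure on $X$, and let $\Phi\in Act(G,X)$ and $\Psi\in Act(G,Y)$ be uniformly conjugate via a uniform equivalence $h:X\to Y$ (i.e. $h\circ\Phi_g=\Psi_g\circ h$ for all $g\in G$). Let $h^*(\mu)$ be the measure on $Y$ given by $h^*(\mu)(A)=\mu(h^{-1}(A))$. Then: (i) if $\Phi$ has $\mu$-shadowing, $\Psi$ has $h^*(\mu)$-shadowing; (ii) if $\Phi$ is $\mu$-expansive, $\Psi$ is $h^*(\mu)$-expansive; (iii) if $\Phi$ is $\mu$-persistent, $\Psi$ is $h^*(\mu)$-persistent; (iv) if $\Phi$ is $\mu$-topologically stable, $\Psi$ is $h^*(\mu)$-topologically stable.
   Context: $D[x]=\{y:(x,y)\in D\}$. $Act(G,X)$: maps $\Phi:G\times X\to X$ with each $\Phi_g$ a uniform equivalence, $\Phi_e=\mathrm{id}$, $\Phi_{g_1g_2}=\Phi_{g_1}\circ\Phi_{g_2}$. Generating sets are finite symmetric. For a measure $\nu$ and action $\Phi$ on a uniform space $Z$: $\Phi$ is $\nu$-expansive if there is a closed entourage $D$ with $\nu(\Gamma_D(x))=0$ for all $x$, where $\Gamma_D(x)=\{y:(\Phi_g(x),\Phi_g(y))\in D\ \forall g\}$. $\{x_g\}$ is a $D$-pseudo orbit (w.r.t. $S$) if $(x_{sg},\Phi_s(x_g))\in D$ for all $s\in S,g$; through $B$ if $x_e\in B$; $E$-shadowed by $x$ if $(x_g,\Phi_g(x))\in E$ for all $g$.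 $\nu$-shadowing: for some $S$, for every entourage $E$ there are an entourage $D$ and measurable $B$ with $\nu(Z\setminus B)=0$ such that every $D$-pseudo orbit through $B$ is $E$-shadowed by some point. $\nu$-persistent: for some $S$, for every $E$ there are $D$ and measurable $B$, $\nu(Z\setminus B)=0$, such that whenever $\Psi'\in Act(G,Z)$ satisfies $(\Psi'_s(x),\Phi_s(x))\in D$ for all $x,s\in S$, for each $x\in B$ there is $y$ with $(\Psi'_g(x),\Phi_g(y))\in E$ for all $g$. For set-valued $H:Z\to\mathcal{P}(Z)$: $Dom(H)=\{x:H(x)\ne\emptyset\}$; $(Id,H)\in E$ means $H(x)\subset E[x]$ for all $x$; upper semi-continuous: for each $x\in Dom(H)$ and open $O\supset H(x)$ there is an entourage $D$ with $H(y)\subset O$ whenever $(x,y)\in D$. $\nu$-topologically stable: for some $S$, for every $E$ there is $D$ such that for every $\Psi'\in Act(G,Z)$ with $(\Psi'_s(x),\Phi_s(x))\in D$ for all $x,s\in S$ there is an upper semi-continuous compact-valued $H$ with measurable domain, $\nu(Z\setminus Dom(H))=0$, $\nu(H(x))=0$ for all $x$, $(Id,H)\in E$, and $\Phi_g(H(x))=H(\Psi'_g(x))$ for all $g,x$. *)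

(* Defs.v *)
From HB Require Import structures.
From mathcomp Require Import all_boot all_order all_algebra.
From mathcomp Require Import all_classical all_reals all_analysis.
From mathcomp Require Import monoid.

Set Implicit Arguments.
Unset Strict Implicit.
Unset Printing Implicit Defensive.

Import Order.TTheory Num.Theory.
Local Open Scope classical_set_scope.
Local Open Scope ereal_scope.

Definition generating_set (G : groupType) (S : seq G) : Prop :=
  (forall s, s \in S -> (s^-1)%g \in S) /\
  (forall g : G, exists l : seq G, {subset l <= S} /\ g = foldr (fun a b => (a * b)%g) 1%g l).

Definition finitely_generated (G : groupType) : Prop :=
  exists S : seq G, generating_set S.

Definition uniform_equiv (X Y : uniformType) (f : X -> Y) : Prop :=
  exists k : Y -> X, [/\ cancel f k, cancel k f, unif_continuous f & unif_continuous k].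

Definition is_action (G : groupType) (X : uniformType) (Phi : G -> X -> X) : Prop :=
  [/\ forall g, uniform_equiv (Phi g),
      Phi 1%g = id &
      forall g1 g2, Phi (g1 * g2)%g = Phi g1 \o Phi g2].

Definition borel (X : topologicalType) (A : set X) : Prop := <<s (@open X) >> A.

Definition borel_measure (R : realType) (X : topologicalType) (mu : set X -> \bar R) : Prop :=
  [/\ mu set0 = 0,
      forall A, borel A -> 0 <= mu A &
      forall F : nat -> set X, (forall n, borel (F n)) -> trivIset setT F ->
        (fun n => \sum_(0 <= i < n) mu (F i)) @ \oo --> mu (\bigcup_n F n)].

Definition pushmeasure (R : realType) (X Y : Type) (h : X -> Y) (mu : set X -> \bar R)
  : set Y -> \bar R := fun A => mu (h @^-1` A).

Section Dyn.
Context (R : realType) (G : groupType) (Z : uniformType).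

Definition Gamma (Phi : G -> Z -> Z) (D : set (Z * Z)) (x : Z) : set Z :=
  [set y | forall g, D (Phi g x, Phi g y)].

Definition nu_expansive (nu : set Z -> \bar R) (Phi : G -> Z -> Z) : Prop :=
  exists D : set (Z * Z), [/\ entourage D, closed D & forall x, nu (Gamma Phi D x) = 0].

Definition pseudo_orbit (S : seq G) (Phi : G -> Z -> Z) (D : set (Z * Z)) (xs : G -> Z) : Prop :=
  forall s g, s \in S -> D (xs (s * g)%g, Phi s (xs g)).

Definition shadowed (Phi : G -> Z -> Z) (E : set (Z * Z)) (xs : G -> Z) (x : Z) : Prop :=
  forall g, E (xs g, Phi g x).

Definition nu_shadowing (nu : set Z -> \bar R) (Phi : G -> Z -> Z) : Prop :=
  exists S : seq G, generating_set S /\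
    forall E, entourage E ->
      exists D B, [/\ entourage D, borel B, nu (~` B) = 0 &
        forall xs, pseudo_orbit S Phi D xs -> B (xs 1%g) ->
          exists x, shadowed Phi E xs x].

Definition act_close (S : seq G) (D : set (Z * Z)) (Psi' Phi : G -> Z -> Z) : Prop :=
  forall x s, s \in S -> D (Psi' s x, Phi s x).

Definition nu_persistent (nu : set Z -> \bar R) (Phi : G -> Z -> Z) : Prop :=
  exists S : seq G, generating_set S /\
    forall E, entourage E ->
      exists D B, [/\ entourage D, borel B, nu (~` B) = 0 &
        forall Psi' : G -> Z -> Z, is_action Psi' -> act_close S D Psi' Phi ->
          forall x, B x -> exists y, forall g, E (Psi' g x, Phi g y)].

Definition Dom (H : Z -> set Z) : set Z := [set x | H x !=set0].

Definition usc (H : Z -> set Z) : Prop :=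
  forall x, Dom H x -> forall O : set Z, open O -> H x `<=` O ->
    exists D, entourage D /\ forall y, D (x, y) -> H y `<=` O.

Definition nu_top_stable (nu : set Z -> \bar R) (Phi : G -> Z -> Z) : Prop :=
  exists S : seq G, generating_set S /\
    forall E, entourage E ->
      exists D, entourage D /\
        forall Psi' : G -> Z -> Z, is_action Psi' -> act_close S D Psi' Phi ->
          exists H : Z -> set Z,
            [/\ usc H /\ (forall x, compact (H x)),
                borel (Dom H) /\ nu (~` Dom H) = 0,
                (forall x, nu (H x) = 0),
                (forall x, H x `<=` xsection E x) &
                forall g x, Phi g @` H x = H (Psi' g x)].

End Dyn.

(* Main.v *)
Require Import Defs.
From HB Require Import structures.
From mathcomp Require Import all_boot all_order all_algebra.
From mathcomp Require Import all_classical all_reals all_analysis.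
From mathcomp Require Import monoid.
Set Implicit Arguments.
Unset Strict Implicit.
Unset Printing Implicit Defensive.
Local Open Scope classical_set_scope.

Lemma uc_ent (U V : uniformType) (f : U -> V) : unif_continuous f ->
  forall E, entourage E -> entourage [set xy | E (f xy.1, f xy.2)].
Proof. by move=> fu E hE; exact: fu. Qed.

Lemma uc_cont (U V : uniformType) (f : U -> V) : unif_continuous f -> continuous f.
Proof.
move=> fu x P; rewrite /= -!nbhs_entourageE => -[E hE sEP].
change (nbhs_ entourage x (f @^-1` P)).
exists [set xy | E (f xy.1, f xy.2)]; first exact: (uc_ent fu hE).
move=> y; rewrite /xsection /= !in_setE /= => Hy; apply: sEP.
by rewrite /xsection /= in_setE.
Qed.

Lemma borel_pre (T U : topologicalType) (f : T -> U) : continuous f ->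
  forall A, borel A -> borel (f @^-1` A).
Proof.
move=> fc A; apply: (@smallest_sub _ _ _ [set A | borel (f @^-1` A)]).
- split.
  + by rewrite /= preimage_set0; exact: sigma_algebra0.
  + move=> B; rewrite /= /borel => hB.
    rewrite setTD preimage_setC -setTD; exact: sigma_algebraCD.
  + move=> F hF; rewrite /= preimage_bigcup; exact: sigma_algebra_bigcup.
- move=> O hO; rewrite /= /borel; apply: sub_sigma_algebra.
  by apply: open_comp => // z _; exact: fc.
Qed.

Lemma pair_cont (U V : uniformType) (f : U -> V) : unif_continuous f ->
  continuous (fun p : U * U => (f p.1, f p.2)).
Proof.
move=> fu p; have fc := uc_cont fu.
apply: cvg_pair.
  apply: (cvg_comp fst f); [exact: cvg_fst | exact: fc].
apply: (cvg_comp snd f); [exact: cvg_snd | exact: fc].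
Qed.

Lemma closed_pre2 (U V : uniformType) (f : U -> V) : unif_continuous f ->
  forall D, closed D -> closed [set p : U * U | D (f p.1, f p.2)].
Proof.
move=> fu D cD.
have -> : [set p : U * U | D (f p.1, f p.2)] = (fun p : U * U => (f p.1, f p.2)) @^-1` D by [].
apply: preimage_closed => // z _; exact: pair_cont.
Qed.

Lemma uc_comp (U V W : uniformType) (f : U -> V) (g : V -> W) :
  unif_continuous f -> unif_continuous g -> unif_continuous (g \o f).
Proof. by move=> fu gu; exact: (cvg_comp _ _ fu gu). Qed.

Theorem proposition4p2 (R : realType) (G : groupType) (X Y : uniformType)
    (mu : set X -> \bar R) (Phi : G -> X -> X) (Psi : G -> Y -> Y) (h : X -> Y) :
  finitely_generated G ->
  borel_measure mu ->
  is_action Phi -> is_action Psi ->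
  uniform_equiv h ->
  (forall g, h \o Phi g = Psi g \o h) ->
  [/\ nu_shadowing mu Phi -> nu_shadowing (pushmeasure h mu) Psi,
      nu_expansive mu Phi -> nu_expansive (pushmeasure h mu) Psi,
      nu_persistent mu Phi -> nu_persistent (pushmeasure h mu) Psi &
      nu_top_stable mu Phi -> nu_top_stable (pushmeasure h mu) Psi].
Proof.
move=> _ _ _ _ [k [hk kh hu ku]] hconj.
have hP : forall g x, h (Phi g x) = Psi g (h x).
  by move=> g x; exact: (congr1 (fun f => f x) (hconj g)).
have kP : forall g y, k (Psi g y) = Phi g (k y).
  by move=> g y; rewrite -{1}[y]kh -hP hk.
have compl : forall B : set X, h @^-1` (~` (k @^-1` B)) = ~` B.
  by move=> B; apply/funext => x; rewrite /preimage /setC /= hk.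
have lift : forall Psi' : G -> Y -> Y, is_action Psi' ->
    is_action (fun g => k \o Psi' g \o h).
  move=> Psi' [Psi'U Psi'1 Psi'M]; split.
  - move=> g; have [k' [a b c d]] := Psi'U g.
    exists (k \o k' \o h); split.
    + by move=> x /=; rewrite kh a hk.
    + by move=> x /=; rewrite kh b hk.
    + by apply: uc_comp => //; apply: uc_comp.
    + by apply: uc_comp => //; apply: uc_comp.
  - by apply/funext => x /=; rewrite Psi'1 /= hk.
  - by move=> g1 g2; apply/funext => x /=; rewrite Psi'M /= kh.
have liftc : forall S D (Psi' : G -> Y -> Y),
    act_close S [set p | D (k p.1, k p.2)] Psi' Psi ->
    act_close S D (fun g => k \o Psi' g \o h) Phi.
  by move=> S D Psi' cl x s sS; have := cl (h x) s sS; rewrite /= kP hk.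
split.
- move=> [S [gS shd]]; exists S; split => // E hE.
  have [D [B [hD bB mB sh]]] := shd _ (uc_ent hu hE).
  exists [set p | D (k p.1, k p.2)], (k @^-1` B); split.
  + exact: (uc_ent ku hD).
  + exact: (borel_pre (uc_cont ku) bB).
  + by rewrite /pushmeasure compl.
  + move=> ys po B1.
    have [x hx] : exists x, shadowed Phi [set xy | E (h xy.1, h xy.2)] (k \o ys) x.
      apply: sh => //.
      by move=> s g sS; rewrite /= -kP; exact: po.
    by exists (h x) => g; have := hx g; rewrite /= kh hP.
- move=> [D [hD cD g0]]; exists [set p | D (k p.1, k p.2)]; split.
  + exact: (uc_ent ku hD).
  + exact: (closed_pre2 ku cD).
  + move=> y; rewrite /pushmeasure.
    have -> : h @^-1` Gamma Psi [set p | D (k p.1, k p.2)] y = Gamma Phi D (k y).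
      apply/funext => x; rewrite /Gamma /preimage /=; apply/propext; split.
      * by move=> H g; have := H g; rewrite /= !kP hk.
      * by move=> H g; rewrite /= !kP hk.
    exact: g0.
- move=> [S [gS per]]; exists S; split => // E hE.
  have [D [B [hD bB mB sh]]] := per _ (uc_ent hu hE).
  exists [set p | D (k p.1, k p.2)], (k @^-1` B); split.
  + exact: (uc_ent ku hD).
  + exact: (borel_pre (uc_cont ku) bB).
  + by rewrite /pushmeasure compl.
  + move=> Psi' aPsi' cl y By.
    have [z hz] := sh _ (lift _ aPsi') (liftc _ _ _ cl) (k y) By.
    by exists (h z) => g; have := hz g; rewrite /= !kh hP.
- move=> [S [gS ts]]; exists S; split => // E hE.
  have [D [hD tsD]] := ts _ (uc_ent hu hE).
  exists [set p | D (k p.1, k p.2)]; split; first exact: (uc_ent ku hD).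
  move=> Psi' aPsi' cl.
  have [H [[usc cpt] [bd md] m0 sub eqv]] := tsD _ (lift _ aPsi') (liftc _ _ _ cl).
  have eD : Dom (fun y => h @` H (k y)) = k @^-1` Dom H.
    apply/funext => y; apply/propext; split.
    * by move=> [_ [x Hx _]]; exists x.
    * by move=> [x Hx]; exists (h x); exists x.
  exists (fun y => h @` H (k y)); split.
  + split.
    * move=> y [_ [x Hx _]] O oO sO.
      have oO' : open (h @^-1` O) by apply: open_comp => // z _; exact: uc_cont.
      have sub' : H (k y) `<=` h @^-1` O by move=> x' Hx'; apply: sO; exists x'.
      have [D1 [hD1 DD]] := usc (k y) (ex_intro _ x Hx) _ oO' sub'.
      exists [set p | D1 (k p.1, k p.2)]; split; first exact: (uc_ent ku hD1).
      by move=> y' Dy' _ [x' Hx' <-]; exact: (DD _ Dy' _ Hx').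
    * move=> y; apply: continuous_compact; last exact: cpt.
      exact: continuous_subspaceT (uc_cont hu).
  + rewrite eD; split; first exact: (borel_pre (uc_cont ku) bd).
    by rewrite /pushmeasure compl.
  + move=> y; rewrite /pushmeasure.
    have -> : h @^-1` (h @` H (k y)) = H (k y).
      apply/funext => x; apply/propext; split.
      * by move=> [x' Hx' e]; have := congr1 k e; rewrite !hk => <-.
      * by move=> Hx; exists x.
    exact: m0.
  + move=> y _ [x Hx <-]; have := sub _ _ Hx.
    by rewrite /xsection /= !in_setE /= kh.
  + move=> g y.
    have := eqv g (k y); rewrite /= kh => <-.
    apply/seteqP; split.
    * move=> _ [_ [x Hx <-] <-]; exists (Phi g x); last by rewrite hP.
      by exists x.
    * move=> _ [_ [x Hx <-] <-]; exists (h x); last by rewrite hP.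
      by exists x.
Qed.
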